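(* Let $r\ge1$ and $f\in H^{r+p(r)}(\mathbb T)$. Then for all $\tau>0$, $$\|P_1^\tau(f)\|_r\le C\tau^2\|f\|_{r+p(r)}^2,$$ with $C$ independent of $\tau$ and $f$, where $$P_1^\tau(f)=\sum_{k\neq0}\sum_{k_1+k_2=k}\frac{k_1^2}{k^2}\int_0^\tau\big(e^{-2isk_2^2}-1\big)\big(e^{-2iskk_1}-1\big)ds\,\widehat{\bar f}_{k_1}\widehat{\bar f}_{k_2}e^{ikx}.$$
   Context: $\mathbb{T}=[-\pi,\pi]$ periodic; $\widehat f_k=\frac1{2\pi}\int_{\mathbb T}f(x)e^{-ikx}dx$; $\|f\|_s^2=\sum_k(1+k^2)^s|\widehat f_k|^2$ is the $H^s$ norm; $\bar f$ is the complex conjugate. The function $p$ on $[1,\infty)$: $p(1)=1$; $p(r)=(3-2r)+$ for $1<r\le7/6$; $p(r)=2/3$ for $7/6<r\le17/12$; $p(r)=(7/2-2r)+$ for $17/12<r\le3/2$; $p(r)=5/4-r/2$ for $3/2<r<5/2$; $p(5/2)=0+$; $p(r)=0$ for $r>5/2$. Here $c+$ means: the statement holds with $c+\varepsilon$ in place of $p(r)$ for every sufficiently small $\varepsilon>0$ (the constant may then depend on $\varepsilon$). *)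

(* Defs.v *)
From Stdlib Require Import Reals ZArith Lra.
From Coquelicot Require Import Coquelicot.
Open Scope R_scope.

(* Sum over Z of a real sequence, enumerated as 0, -1, 1, -2, 2, ... (paired) *)
Definition zpair (a : Z -> R) (n : nat) : R :=
  a (Z.of_nat n) + a (- Z.of_nat (S n))%Z.
Definition zsummable (a : Z -> R) : Prop := ex_series (zpair a).
Definition zsum (a : Z -> R) : R := Series (zpair a).

Definition zsumC (a : Z -> C) : C :=
  (zsum (fun k => Re (a k)), zsum (fun k => Im (a k))).

Definition sob_w (s : R) (k : Z) : R := Rpower (1 + IZR k ^ 2) s.

(* A Fourier coefficient sequence c (c k = \hat g_k) lies in H^s(T) *)
Definition inH (s : R) (c : Z -> C) : Prop :=
  zsummable (fun k => sob_w s k * Cmod (c k) ^ 2).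

Definition Hnorm2 (s : R) (c : Z -> C) : R :=
  zsum (fun k => sob_w s k * Cmod (c k) ^ 2).
Definition Hnorm (s : R) (c : Z -> C) : R := sqrt (Hnorm2 s c).

(* Fourier coefficients of the conjugate: \hat{\bar f}_k = conj (\hat f_{-k}) *)
Definition conj_coef (fh : Z -> C) (k : Z) : C := Cconj (fh (- k)%Z).

Definition cexpi (t : R) : C := (cos t, sin t).

Definition Iphase (tau : R) (k k1 k2 : Z) : C :=
  RInt (V := C_R_CompleteNormedModule)
    (fun s => (cexpi (-2 * s * IZR k2 ^ 2) - 1) * (cexpi (-2 * s * IZR k * IZR k1) - 1))%C
    0 tau.

Definition P1coef (tau : R) (fh : Z -> C) (k : Z) : C :=
  if Z.eqb k 0 then 0%C else
  zsumC (fun k1 =>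
    let k2 := (k - k1)%Z in
    (RtoC (IZR k1 ^ 2 / IZR k ^ 2) * Iphase tau k k1 k2
      * conj_coef fh k1 * conj_coef fh k2)%C).

(* The exponent function p(r): base value and whether it carries a "+" *)
Definition p_base (r : R) : R :=
  if Rle_dec r 1 then 1
  else if Rle_dec r (7/6) then 3 - 2 * r
  else if Rle_dec r (17/12) then 2/3
  else if Rle_dec r (3/2) then 7/2 - 2 * r
  else if Rlt_dec r (5/2) then 5/4 - r / 2
  else 0.
Definition p_plus (r : R) : bool :=
  if Rle_dec r 1 then false
  else if Rle_dec r (7/6) then true
  else if Rle_dec r (17/12) then false
  else if Rle_dec r (3/2) then true
  else if Rlt_dec r (5/2) then false
  else if Rle_dec r (5/2) then true
  else false.
(* p(r) with the "+" realized by eps *)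
Definition p_eps (r eps : R) : R :=
  p_base r + (if p_plus r then eps else 0).

(* Main.v *)
Require Import Defs.
From Stdlib Require Import Reals ZArith Lra Lia.
From Coquelicot Require Import Coquelicot.
Open Scope R_scope.


Fixpoint isum (a : Z -> R) (lo : Z) (n : nat) : R :=
  match n with O => 0 | S n' => isum a lo n' + a (lo + Z.of_nat n')%Z end.

Lemma isum_ext a b lo n : (forall x, a x = b x) -> isum a lo n = isum b lo n.
Proof. intros H; induction n; simpl; [lra| rewrite IHn, H; lra]. Qed.

Lemma isum_le a b lo n : (forall x, a x <= b x) -> isum a lo n <= isum b lo n.
Proof. intros H; induction n; simpl; [lra| specialize (H (lo + Z.of_nat n)%Z); lra]. Qed.

Lemma isum_nonneg a lo n : (forall x, 0 <= a x) -> 0 <= isum a lo n.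
Proof. intros H; induction n; simpl; [lra| specialize (H (lo + Z.of_nat n)%Z); lra]. Qed.

Lemma isum_plus a b lo n : isum (fun x => a x + b x) lo n = isum a lo n + isum b lo n.
Proof. induction n; simpl; lra. Qed.

Lemma isum_scal c a lo n : isum (fun x => c * a x) lo n = c * isum a lo n.
Proof. induction n; simpl; [lra| rewrite IHn; lra]. Qed.

Lemma isum_app a lo n m : isum a lo (n + m) = isum a lo n + isum a (lo + Z.of_nat n) m.
Proof.
  induction m; simpl.
  - rewrite Nat.add_0_r; lra.
  - rewrite Nat.add_succ_r; simpl. rewrite IHm.
    replace (lo + Z.of_nat (n + m))%Z with (lo + Z.of_nat n + Z.of_nat m)%Z by lia. lra.
Qed.

Lemma isum_cons a lo n : isum a lo (S n) = a lo + isum a (lo + 1) n.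
Proof.
  change (S n) with (1 + n)%nat. rewrite isum_app. simpl.
  replace (lo + 0)%Z with lo by lia. lra.
Qed.

Lemma isum_refl a k lo n :
  isum (fun x => a (k - x)%Z) lo n = isum a (k - lo - Z.of_nat n + 1) n.
Proof.
  induction n.
  - reflexivity.
  - simpl isum at 1. rewrite IHn.
    replace (k - lo - Z.of_nat (S n) + 1)%Z with (k - lo - Z.of_nat n)%Z by lia.
    rewrite isum_cons.
    replace (k - (lo + Z.of_nat n))%Z with (k - lo - Z.of_nat n)%Z by lia.
    replace (k - lo - Z.of_nat n + 1)%Z with (k - lo - Z.of_nat n + 1)%Z by lia. lra.
Qed.

Lemma isum_sub a lo n lo' n' : (forall x, 0 <= a x) ->
  (lo' <= lo)%Z -> (lo + Z.of_nat n <= lo' + Z.of_nat n')%Z ->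
  isum a lo n <= isum a lo' n'.
Proof.
  intros Ha H1 H2.
  assert (E : exists d1 d2, n' = (d1 + n + d2)%nat /\ lo = (lo' + Z.of_nat d1)%Z).
  { exists (Z.to_nat (lo - lo')), (Z.to_nat (lo' + Z.of_nat n' - lo - Z.of_nat n)). lia. }
  destruct E as [d1 [d2 [-> E]]].
  rewrite !isum_app.
  rewrite <- E.
  replace (lo' + Z.of_nat (d1 + n))%Z with (lo + Z.of_nat n)%Z by lia.
  pose proof (isum_nonneg a lo' d1 Ha).
  pose proof (isum_nonneg a (lo + Z.of_nat n) d2 Ha). lra.
Qed.

Lemma isum_symbound a B : (forall x, 0 <= a x) ->
  (forall M, isum a (- Z.of_nat M) (2 * M + 1) <= B) ->
  forall lo n, isum a lo n <= B.
Proof.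
  intros Ha HB lo n.
  eapply Rle_trans; [| apply (HB (Z.abs_nat lo + n)%nat)].
  apply isum_sub; auto; lia.
Qed.

Lemma isum_S a lo n : isum a lo (S n) = isum a lo n + a (lo + Z.of_nat n)%Z.
Proof. reflexivity. Qed.

Lemma ps_isum a N : sum_n (zpair a) N = isum a (- Z.of_nat N - 1) (2 * N + 2).
Proof.
  induction N.
  - rewrite sum_O. unfold zpair. simpl. lra.
  - rewrite sum_Sn, IHN. 
    replace (2 * S N + 2)%nat with (S (S (2 * N + 2))) by lia.
    rewrite isum_cons, isum_S.
    unfold zpair. change plus with Rplus.
    replace (- Z.of_nat (S N) - 1 + 1)%Z with (- Z.of_nat N - 1)%Z by lia.
    replace (- Z.of_nat N - 1 + Z.of_nat (2 * N + 2))%Z with (Z.of_nat (S N)) by lia.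
    replace (- Z.of_nat (S (S N)))%Z with (- Z.of_nat (S N) - 1)%Z by lia.
    lra.
Qed.

Lemma zsum_bound a B : (forall x, 0 <= a x) ->
  (forall lo n, isum a lo n <= B) -> zsummable a /\ zsum a <= B.
Proof.
  intros Ha HB.
  assert (Hinc : forall n, sum_n (zpair a) n <= sum_n (zpair a) (S n)).
  { intros n. rewrite sum_Sn. unfold zpair. change plus with Rplus.
    pose proof (Ha (Z.of_nat (S n))). pose proof (Ha (- Z.of_nat (S (S n)))%Z). lra. }
  assert (Hb : forall n, sum_n (zpair a) n <= B).
  { intros n. rewrite ps_isum. apply HB. }
  destruct (ex_finite_lim_seq_incr _ B Hinc Hb) as [l Hl].
  assert (His : is_series (zpair a) l) by exact Hl.
  split. { exists l; exact His. }
  unfold zsum. rewrite (is_series_unique _ _ His).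
  apply (is_lim_seq_le (sum_n (zpair a)) (fun _ => B) l B); auto.
  apply is_lim_seq_const.
Qed.

Lemma zsum_ge a lo n : (forall x, 0 <= a x) -> zsummable a -> isum a lo n <= zsum a.
Proof.
  intros Ha [l Hl].
  assert (Hinc : forall n, sum_n (zpair a) n <= sum_n (zpair a) (S n)).
  { intros m. rewrite sum_Sn. unfold zpair. change plus with Rplus.
    pose proof (Ha (Z.of_nat (S m))). pose proof (Ha (- Z.of_nat (S (S m)))%Z). lra. }
  unfold zsum. rewrite (is_series_unique _ _ Hl).
  pose proof (is_lim_seq_incr_compare _ l Hl Hinc (Z.abs_nat lo + n)%nat) as H.
  rewrite ps_isum in H. eapply Rle_trans; [|exact H].
  apply isum_sub; auto; lia.
Qed.

Lemma zsum_nonneg a : (forall x, 0 <= a x) -> zsummable a -> 0 <= zsum a.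
Proof. intros Ha Hs. apply (zsum_ge a 0 0 Ha Hs). Qed.

Lemma zsum_cmp g a B : (forall x, Rabs (g x) <= a x) ->
  (forall lo n, isum a lo n <= B) -> zsummable g /\ Rabs (zsum g) <= B.
Proof.
  intros Hg HB.
  assert (Ha : forall x, 0 <= a x) by (intros x; specialize (Hg x); pose proof (Rabs_pos (g x)); lra).
  destruct (zsum_bound a B Ha HB) as [Hs Hz].
  assert (Hn : forall n, norm (zpair g n) <= zpair a n).
  { intros n. unfold zpair. change norm with Rabs.
    eapply Rle_trans; [apply Rabs_triang|]. apply Rplus_le_compat; apply Hg. }
  assert (Hgs : zsummable g) by (unfold zsummable; apply (ex_series_le (K:=R_AbsRing) (V:=R_CompleteNormedModule) _ _ Hn Hs)).
  split; auto.
  assert (Hgabs : ex_series (fun n => Rabs (zpair g n))).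
  { apply (ex_series_le (K:=R_AbsRing) (V:=R_CompleteNormedModule) (fun n => Rabs (zpair g n)) (zpair a)); [| exact Hs]. intros n. change norm with Rabs. rewrite Rabs_Rabsolu. apply Hn. }
  unfold zsum. eapply Rle_trans; [apply Series_Rabs; exact Hgabs|].
  eapply Rle_trans; [apply Series_le; [| exact Hs]|exact Hz].
  intros n. split; [apply Rabs_pos| apply Hn].
Qed.


Lemma Rabs_sin_le x : Rabs (sin x) <= Rabs x.
Proof.
  assert (H : forall y, 0 < y -> Rabs (sin y) <= y).
  { intros y Hy. pose proof (sin_lt_x y Hy). pose proof (SIN_bound y).
    destruct (Rle_dec y PI).
    - pose proof (sin_ge_0 y (Rlt_le _ _ Hy) r). rewrite Rabs_right; lra.
    - pose proof PI_RGT_0. pose proof PI_4. 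
      assert (1 < y). { pose proof (PI2_1). lra. }
      apply Rabs_le; lra. }
  destruct (Rtotal_order x 0) as [Hx|[Hx|Hx]].
  - rewrite <- (Ropp_involutive x), sin_neg, !Rabs_Ropp.
    rewrite (Rabs_left x) by lra. apply H; lra.
  - subst. rewrite sin_0, Rabs_R0; lra.
  - rewrite (Rabs_right x) by lra. apply H; lra.
Qed.

Lemma cexpi_m1 t : Cmod (cexpi t - 1) ^ 2 = 2 - 2 * cos t.
Proof.
  unfold Cmod, cexpi. simpl. rewrite !Rmult_1_r, sqrt_sqrt.
  - pose proof (sin2_cos2 t). unfold Rsqr in H. nra.
  - pose proof (Rle_0_sqr (cos t + -1)); pose proof (Rle_0_sqr (sin t + - 0)); unfold Rsqr in *; lra.
Qed.

Lemma cexpi_m1_le t : Cmod (cexpi t - 1) <= Rabs t.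
Proof.
  apply Rsqr_incr_0_var; [| apply Rabs_pos].
  unfold Rsqr. replace (Cmod (cexpi t - 1) * Cmod (cexpi t - 1)) with (Cmod (cexpi t - 1) ^ 2) by ring.
  rewrite cexpi_m1. replace t with (2 * (t/2)) at 1 by field.
  rewrite cos_2a_sin. pose proof (Rabs_sin_le (t/2)).
  assert (Rabs (sin (t/2)) * Rabs (sin (t/2)) <= Rabs (t/2) * Rabs (t/2)).
  { apply Rmult_le_compat; auto; apply Rabs_pos. }
  rewrite <- !Rabs_mult in H0. rewrite <- Rabs_mult.
  rewrite !Rabs_right in * by (apply Rle_ge; nra). nra.
Qed.

Lemma cexpi_m1_le2 t : Cmod (cexpi t - 1) <= 2.
Proof.
  apply Rsqr_incr_0_var; [| lra].
  unfold Rsqr. replace (Cmod (cexpi t - 1) * Cmod (cexpi t - 1)) with (Cmod (cexpi t - 1) ^ 2) by ring.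
  rewrite cexpi_m1. pose proof (COS_bound t). lra.
Qed.

Lemma Iphase_ex tau k k1 k2 :
  ex_RInt (V := C_R_CompleteNormedModule)
    (fun s => (cexpi (-2 * s * IZR k2 ^ 2) - 1) * (cexpi (-2 * s * IZR k * IZR k1) - 1))%C
    0 tau.
Proof.
  apply (ex_RInt_fct_extend_pair (U:=R_NormedModule) (V:=R_NormedModule)).
  - apply (ex_RInt_continuous (V:=R_CompleteNormedModule)). intros z _.
    unfold cexpi; simpl. apply (ex_derive_continuous (K:=R_AbsRing) (V:=R_NormedModule)). auto_derive. auto.
  - apply (ex_RInt_continuous (V:=R_CompleteNormedModule)). intros z _.
    unfold cexpi; simpl. apply (ex_derive_continuous (K:=R_AbsRing) (V:=R_NormedModule)). auto_derive. auto.
Qed.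

Lemma Iphase_bound tau k k1 k2 : 0 < tau ->
  Cmod (Iphase tau k k1 k2) <= 4 * tau ^ 2 * Rmin (IZR k2 ^ 2) (Rabs (IZR k * IZR k1)).
Proof.
  intros Ht. unfold Iphase.
  pose proof (RInt_correct _ _ _ (Iphase_ex tau k k1 k2)) as Hc.
  rewrite Cmod_norm.
  replace (4 * tau ^ 2 * Rmin (IZR k2 ^ 2) (Rabs (IZR k * IZR k1)))
    with ((tau - 0) * (4 * tau * Rmin (IZR k2 ^ 2) (Rabs (IZR k * IZR k1)))) by ring.
  refine (norm_RInt_le_const (V:=C_R_NormedModule) _ 0 tau _ _ (Rlt_le _ _ Ht) _ Hc).
  intros x Hx. rewrite <- Cmod_norm, Cmod_mult.
  pose proof (cexpi_m1_le (-2 * x * IZR k2 ^ 2)).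
  pose proof (cexpi_m1_le2 (-2 * x * IZR k2 ^ 2)).
  pose proof (cexpi_m1_le (-2 * x * IZR k * IZR k1)).
  pose proof (cexpi_m1_le2 (-2 * x * IZR k * IZR k1)).
  pose proof (Cmod_ge_0 (cexpi (-2 * x * IZR k2 ^ 2) - 1)).
  pose proof (Cmod_ge_0 (cexpi (-2 * x * IZR k * IZR k1) - 1)).
  assert (E1 : Rabs (-2 * x * IZR k2 ^ 2) <= 2 * tau * IZR k2 ^ 2).
  { rewrite Rabs_mult, Rabs_mult, Rabs_left, Rabs_right, (Rabs_right (IZR k2 ^ 2)) by nra. nra. }
  assert (E2 : Rabs (-2 * x * IZR k * IZR k1) <= 2 * tau * Rabs (IZR k * IZR k1)).
  { replace (-2 * x * IZR k * IZR k1) with ((-2 * x) * (IZR k * IZR k1)) by ring.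
    rewrite Rabs_mult, (Rabs_mult (-2)), Rabs_left, (Rabs_right x) by nra.
    pose proof (Rabs_pos (IZR k * IZR k1)). nra. }
  pose proof (Rabs_pos (IZR k * IZR k1)).
  assert (0 <= IZR k2 ^ 2) by nra.
  apply Rmin_case_strong; intros _.
  - apply Rle_trans with ((2 * tau * IZR k2 ^ 2) * 2); [apply Rmult_le_compat; lra| lra].
  - apply Rle_trans with (2 * (2 * tau * Rabs (IZR k * IZR k1))); [apply Rmult_le_compat; lra| lra].
Qed.


Lemma exp_le x y : x <= y -> exp x <= exp y.
Proof. intros [H|H]; [left; apply exp_increasing; auto| subst; lra]. Qed.

Lemma ln_le x y : 0 < x -> x <= y -> ln x <= ln y.
Proof. intros H [H1|H1]; [left; apply ln_increasing; auto| subst; lra]. Qed.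

Lemma Rpower_pos x y : 0 < Rpower x y.
Proof. apply exp_pos. Qed.

Lemma Rpower_1b e : Rpower 1 e = 1.
Proof. unfold Rpower. rewrite ln_1, Rmult_0_r, exp_0. auto. Qed.

Lemma Rpower_anti a b y : 0 < a -> a <= b -> y <= 0 -> Rpower b y <= Rpower a y.
Proof.
  intros Ha Hab Hy. unfold Rpower. apply exp_le.
  pose proof (ln_le a b Ha Hab). nra.
Qed.

Lemma Rpower_mono a b y : 0 < a -> a <= b -> 0 <= y -> Rpower a y <= Rpower b y.
Proof. intros. apply Rle_Rpower_l; auto. Qed.

Lemma Rpower_ge1 x y : 1 <= x -> 0 <= y -> 1 <= Rpower x y.
Proof.
  intros. rewrite <- (Rpower_O x) by lra. apply Rle_Rpower; auto.
Qed.

Lemma Rpower_sq x e : 0 < x -> Rpower (x ^ 2) e = Rpower x (2 * e).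
Proof.
  intros Hx. rewrite <- (Rpower_pow 2 x Hx), Rpower_mult. simpl INR. replace ((1+1)*e) with (2*e) by ring. reflexivity.
Qed.

Lemma tel_pos b x : 0 < b <= 1 -> 1 < x ->
  Rpower x (b - 1) <= (Rpower x b - Rpower (x - 1) b) / b.
Proof.
  intros Hb Hx.
  destruct (MVT_cor2 (fun y => Rpower y b) (fun y => b * Rpower y (b - 1)) (x - 1) x)
    as [c [Hc1 Hc2]]; [lra| |].
  { intros c Hc. apply derivable_pt_lim_power. lra. }
  rewrite Hc1. replace (x - (x-1)) with 1 by ring.
  apply (Rmult_le_reg_l b); [lra|]. field_simplify; [|lra].
  apply Rmult_le_compat_l; [lra|]. apply Rpower_anti; lra.
Qed.

Lemma tel_neg b x : b < 0 -> 1 < x ->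
  Rpower x (b - 1) <= (Rpower (x - 1) b - Rpower x b) / (- b).
Proof.
  intros Hb Hx.
  destruct (MVT_cor2 (fun y => Rpower y b) (fun y => b * Rpower y (b - 1)) (x - 1) x)
    as [c [Hc1 Hc2]]; [lra| |].
  { intros c Hc. apply derivable_pt_lim_power. lra. }
  replace (Rpower (x - 1) b - Rpower x b) with (- (Rpower x b - Rpower (x - 1) b)) by ring.
  rewrite Hc1. replace (x - (x-1)) with 1 by ring.
  apply (Rmult_le_reg_l (-b)); [lra|]. field_simplify; [|lra].
  replace (- b * Rpower c (b - 1)) with ((-b) * Rpower c (b - 1)) by ring.
  apply Rmult_le_compat_l; [lra|]. apply Rpower_anti; lra.
Qed.


Lemma isum_le_in a b lo n : (forall i, (i < n)%nat -> a (lo + Z.of_nat i)%Z <= b (lo + Z.of_nat i)%Z) ->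
  isum a lo n <= isum b lo n.
Proof.
  induction n; intros H; simpl; [lra|].
  apply Rplus_le_compat; [apply IHn; intros; apply H; lia| apply H; lia].
Qed.

Lemma isum_const c lo n : isum (fun _ => c) lo n = INR n * c.
Proof. induction n; simpl isum; [simpl; ring| rewrite IHn, S_INR; ring]. Qed.

Definition L (j : Z) : R := 1 + IZR j ^ 2.

Lemma L_ge1 j : 1 <= L j.
Proof. unfold L. pose proof (pow2_ge_0 (IZR j)). lra. Qed.

Lemma L_pos j : 0 < L j.
Proof. pose proof (L_ge1 j); lra. Qed.

Lemma psum_pos b n : 0 < b <= 1 ->
  isum (fun j => Rpower (IZR j) (b - 1)) 2 n <= (Rpower (IZR (Z.of_nat n) + 1) b - 1) / b.
Proof.
  intros Hb. induction n.
  - simpl. replace (0 + 1) with 1 by ring. rewrite Rpower_1b. unfold Rdiv. lra.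
  - rewrite isum_S. rewrite Nat2Z.inj_succ, succ_IZR.
    rewrite plus_IZR. pose proof (tel_pos b (IZR (Z.of_nat n) + 2) Hb).
    assert (0 <= IZR (Z.of_nat n)) by (apply IZR_le; lia).
    replace (IZR (Z.of_nat n) + 2 - 1) with (IZR (Z.of_nat n) + 1) in H by ring.
    replace (IZR 2 + IZR (Z.of_nat n)) with (IZR (Z.of_nat n) + 2) by (simpl; ring).
    replace (IZR (Z.of_nat n) + 1 + 1) with (IZR (Z.of_nat n) + 2) by ring.
    specialize (H ltac:(lra)).
    eapply Rle_trans; [apply Rplus_le_compat; [exact IHn| exact H]|].
    apply Req_le. field. lra.
Qed.

Lemma psum_pos1 b n : 0 < b <= 1 ->
  isum (fun j => Rpower (IZR j) (b - 1)) 1 n <= (1 + 1 / b) * Rpower (IZR (Z.of_nat n)) b.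
Proof.
  intros Hb. destruct n.
  - simpl. pose proof (Rpower_pos 0 b). assert (0 < 1/b) by (apply Rdiv_lt_0_compat; lra). nra.
  - rewrite isum_cons. simpl (1+1)%Z. 
    pose proof (psum_pos b n Hb).
    rewrite Rpower_1b.
    rewrite Nat2Z.inj_succ, succ_IZR.
    assert (0 <= IZR (Z.of_nat n)) by (apply IZR_le; lia).
    assert (1 <= Rpower (IZR (Z.of_nat n) + 1) b) by (apply Rpower_ge1; lra).
    set (R1 := Rpower (IZR (Z.of_nat n) + 1) b) in *.
    assert ((R1 - 1) / b <= R1 / b).
    { unfold Rdiv. apply Rmult_le_compat_r; [left; apply Rinv_0_lt_compat; lra| lra]. }
    assert (R1 / b = 1 / b * R1) by (field; lra).
    nra.
Qed.

Lemma psum_neg b c n : b < 0 -> (1 <= c)%Z ->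
  isum (fun j => Rpower (IZR j) (b - 1)) (c + 1) n <= Rpower (IZR c) b / (- b).
Proof.
  intros Hb Hc.
  assert (Hcl : isum (fun j => Rpower (IZR j) (b - 1)) (c + 1) n
     <= (Rpower (IZR c) b - Rpower (IZR c + IZR (Z.of_nat n)) b) / (- b)).
  { induction n.
    - simpl. replace (IZR c + 0) with (IZR c) by ring. unfold Rdiv. lra.
    - rewrite isum_S. rewrite Nat2Z.inj_succ, succ_IZR.
      assert (0 <= IZR (Z.of_nat n)) by (apply IZR_le; lia).
      assert (1 <= IZR c) by (apply IZR_le; lia).
      pose proof (tel_neg b (IZR c + IZR (Z.of_nat n) + 1) Hb ltac:(lra)).
      rewrite !plus_IZR.
      replace (IZR c + IZR (Z.of_nat n) + 1 - 1) with (IZR c + IZR (Z.of_nat n)) in H1 by ring.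
      replace (IZR c + IZR 1 + IZR (Z.of_nat n)) with (IZR c + IZR (Z.of_nat n) + 1) by (simpl; ring).
      replace (IZR c + (IZR (Z.of_nat n) + 1)) with (IZR c + IZR (Z.of_nat n) + 1) by ring.
      eapply Rle_trans; [apply Rplus_le_compat; [exact IHn| exact H1]|].
      apply Req_le. field. lra. }
  eapply Rle_trans; [exact Hcl|]. unfold Rdiv. apply Rmult_le_compat_r.
  - left; apply Rinv_0_lt_compat; lra.
  - pose proof (Rpower_pos (IZR c + IZR (Z.of_nat n)) b). lra.
Qed.

Lemma IZR_nat_nonneg n : 0 <= IZR (Z.of_nat n).
Proof. apply IZR_le; lia. Qed.

Lemma Lpow_le_j e j : e <= 0 -> (1 <= j)%Z -> Rpower (L j) e <= Rpower (IZR j) (2 * e).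
Proof.
  intros He Hj. assert (1 <= IZR j) by (apply IZR_le; lia).
  rewrite <- Rpower_sq by lra. apply Rpower_anti; [nra| unfold L; lra| lra].
Qed.

Lemma sqrtL_bound c : IZR (Z.of_nat c) + 1 <= 2 * Rpower (L (Z.of_nat c)) (/ 2).
Proof.
  rewrite Rpower_sqrt by apply L_pos.
  pose proof (IZR_nat_nonneg c).
  apply Rsqr_incr_0_var; [| pose proof (sqrt_pos (L (Z.of_nat c))); lra].
  unfold Rsqr. replace (2 * sqrt (L (Z.of_nat c)) * (2 * sqrt (L (Z.of_nat c))))
    with (4 * (sqrt (L (Z.of_nat c)) * sqrt (L (Z.of_nat c)))) by ring.
  rewrite sqrt_sqrt by (pose proof (L_pos (Z.of_nat c)); lra). unfold L. nra.
Qed.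

Lemma LP0 e c : 0 <= e ->
  isum (fun j => Rpower (L j) e) 0 (S c) <= 2 * Rpower (L (Z.of_nat c)) (e + / 2).
Proof.
  intros He.
  apply Rle_trans with (isum (fun _ => Rpower (L (Z.of_nat c)) e) 0 (S c)).
  - apply isum_le_in. intros i Hi. apply Rpower_mono; [apply L_pos| |lra].
    unfold L. simpl Z.add. assert (0 <= IZR (Z.of_nat i) <= IZR (Z.of_nat c)).
    { split; apply IZR_le; lia. } nra.
  - rewrite isum_const, Rpower_plus. rewrite S_INR, INR_IZR_INZ.
    pose proof (sqrtL_bound c). pose proof (Rpower_pos (L (Z.of_nat c)) e).
    pose proof (IZR_nat_nonneg c). nra.
Qed.

Lemma LP0' e c : e <= 0 ->
  isum (fun j => Rpower (L j) e) 0 (S c) <= 2 * Rpower (L (Z.of_nat c)) (/ 2).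
Proof.
  intros He.
  apply Rle_trans with (isum (fun _ => 1) 0 (S c)).
  - apply isum_le_in. intros i Hi. pose proof (Rpower_anti 1 (L (0 + Z.of_nat i)) e ltac:(lra) (L_ge1 _) He) as HH; rewrite Rpower_1b in HH; exact HH.
  - rewrite isum_const, S_INR, INR_IZR_INZ.
    pose proof (sqrtL_bound c). lra.
Qed.

Lemma LP1 e c : - / 2 < e <= 0 ->
  isum (fun j => Rpower (L j) e) 0 (S c) <= (2 + 1 / (2 * e + 1)) * Rpower (L (Z.of_nat c)) (e + / 2).
Proof.
  intros He. set (b := 2 * e + 1).
  assert (Hb : 0 < b <= 1) by (unfold b; lra).
  rewrite isum_cons. replace (L 0) with 1 by (unfold L; simpl; ring). rewrite Rpower_1b.
  assert (HR : 1 <= Rpower (L (Z.of_nat c)) (e + / 2)) by (apply Rpower_ge1; [apply L_ge1| lra]).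
  assert (H1b : 0 < 1 / b) by (apply Rdiv_lt_0_compat; lra).
  destruct c.
  - simpl isum. fold b. nra.
  - apply Rle_trans with (1 + isum (fun j => Rpower (IZR j) (b - 1)) 1 (S c)).
    { apply Rplus_le_compat_l. apply isum_le_in. intros i Hi.
      replace (b - 1) with (2 * e) by (unfold b; ring).
      apply Lpow_le_j; [lra| lia]. }
    pose proof (psum_pos1 b (S c) Hb).
    assert (Rpower (IZR (Z.of_nat (S c))) b <= Rpower (L (Z.of_nat (S c))) (e + / 2)).
    { assert (1 <= IZR (Z.of_nat (S c))) by (apply IZR_le; lia).
      replace b with (2 * (e + / 2)) by (unfold b; field).
      rewrite <- Rpower_sq by lra. apply Rpower_mono; [nra| unfold L; lra| lra]. }
    fold b. 
    assert ((1 + 1 / b) * Rpower (IZR (Z.of_nat (S c))) b <= (1 + 1/b) * Rpower (L (Z.of_nat (S c))) (e + / 2)).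
    { apply Rmult_le_compat_l; lra. }
    lra.
Qed.

Lemma LP2 e c n : e < - / 2 -> (1 <= c)%Z ->
  isum (fun j => Rpower (L j) e) (c + 1) n <=
    (Rpower (/ 2) (e + / 2) / (- (2 * e + 1))) * Rpower (L c) (e + / 2).
Proof.
  intros He Hc. set (b := 2 * e + 1).
  assert (Hb : b < 0) by (unfold b; lra).
  apply Rle_trans with (isum (fun j => Rpower (IZR j) (b - 1)) (c + 1) n).
  { apply isum_le_in. intros i Hi. replace (b - 1) with (2 * e) by (unfold b; ring).
    apply Lpow_le_j; [lra| lia]. }
  eapply Rle_trans; [apply psum_neg; auto|].
  assert (1 <= IZR c) by (apply IZR_le; lia).
  assert (Rpower (IZR c) b <= Rpower (/ 2) (e + / 2) * Rpower (L c) (e + / 2)).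
  { replace b with (2 * (e + / 2)) by (unfold b; field).
    rewrite <- Rpower_sq by lra. rewrite Rpower_mult_distr by (try apply L_pos; lra).
    apply Rpower_anti; [pose proof (L_pos c); lra| unfold L; nra| lra]. }
  unfold Rdiv. 
  assert (0 < / - b) by (apply Rinv_0_lt_compat; lra).
  fold b. nra.
Qed.


Lemma Rpower_div4 x s : 0 < x -> Rpower (x / 4) s = Rpower x s / Rpower 4 s.
Proof.
  intros Hx. unfold Rdiv. rewrite <- Rpower_mult_distr by lra.
  f_equal. unfold Rpower. rewrite ln_Rinv by lra. rewrite <- exp_Ropp. f_equal. ring.
Qed.

Lemma Rpower_pow2 x : 0 < x -> Rpower x 2 = x ^ 2.
Proof. intros. rewrite <- Rpower_pow by auto. f_equal; simpl; ring. Qed.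
Lemma Rpower_pow3 x : 0 < x -> Rpower x 3 = x ^ 3.
Proof. intros. rewrite <- Rpower_pow by auto. f_equal; simpl; ring. Qed.

Lemma Rpower_minus x y z : 0 < x -> Rpower x (y - z) = Rpower x y / Rpower x z.
Proof. intros. unfold Rminus, Rdiv. rewrite Rpower_plus, Rpower_Ropp. ring. Qed.

Lemma inv_pow_le Lk L1 s : 0 < Lk -> 0 < L1 -> 0 <= s -> Lk <= 4 * L1 ->
  / Rpower L1 s <= Rpower 4 s / Rpower Lk s.
Proof.
  intros H1 H2 Hs H.
  assert (Rpower (Lk / 4) s <= Rpower L1 s) by (apply Rpower_mono; lra).
  rewrite Rpower_div4 in H0 by lra.
  pose proof (Rpower_pos Lk s). pose proof (Rpower_pos 4 s). pose proof (Rpower_pos L1 s).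
  apply (Rmult_le_reg_r (Rpower L1 s)); auto.
  rewrite Rinv_l by lra.
  apply (Rmult_le_reg_r (/ Rpower 4 s)); [apply Rinv_0_lt_compat; lra|].
  replace (Rpower 4 s / Rpower Lk s * Rpower L1 s * / Rpower 4 s) with (Rpower L1 s / Rpower Lk s) by (field; lra).
  replace (1 * / Rpower 4 s) with (Rpower Lk s / Rpower 4 s / Rpower Lk s) by (field; lra).
  unfold Rdiv. apply Rmult_le_compat_r; [left; apply Rinv_0_lt_compat; lra| exact H0].
Qed.

Definition Kf (r s : R) (Lk L1 L2 m : R) : R := Rpower Lk r * m ^ 2 / (Rpower L1 s * Rpower L2 s).

Lemma Kf_R1 r s Lk L1 L2 m : 0 < Lk -> 0 < L1 -> 0 < L2 -> 0 <= s ->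
  m ^ 2 <= 16 * L2 ^ 2 -> Lk <= 4 * L1 ->
  Kf r s Lk L1 L2 m <= 16 * Rpower 4 s * Rpower Lk (r - s) * Rpower L2 (2 - s).
Proof.
  intros HK H1 H2 Hs Hm HL. unfold Kf.
  rewrite !Rpower_minus, Rpower_pow2 by auto.
  pose proof (inv_pow_le Lk L1 s HK H1 Hs HL).
  pose proof (Rpower_pos Lk r). pose proof (Rpower_pos L1 s). pose proof (Rpower_pos L2 s).
  pose proof (Rpower_pos Lk s). pose proof (Rpower_pos 4 s).
  unfold Rdiv. rewrite Rinv_mult.
  replace (Rpower Lk r * m ^ 2 * (/ Rpower L1 s * / Rpower L2 s))
    with ((Rpower Lk r * / Rpower L2 s) * (m ^ 2 * / Rpower L1 s)) by ring.
  replace (16 * Rpower 4 s * (Rpower Lk r * / Rpower Lk s) * (L2 ^ 2 * / Rpower L2 s))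
    with ((Rpower Lk r * / Rpower L2 s) * ((16 * L2 ^ 2) * (Rpower 4 s / Rpower Lk s))) by (unfold Rdiv; ring).
  apply Rmult_le_compat_l; [apply Rmult_le_pos; [lra| left; apply Rinv_0_lt_compat; lra]|].
  apply Rmult_le_compat; auto; [apply pow2_ge_0| left; apply Rinv_0_lt_compat; lra].
Qed.

Lemma Kf_R2 r s Lk L1 L2 m : 0 < Lk -> 0 < L1 -> 0 < L2 -> 0 <= s ->
  m ^ 2 <= 2 * L1 ^ 3 / Lk -> Lk <= 4 * L2 ->
  Kf r s Lk L1 L2 m <= 2 * Rpower 4 s * Rpower Lk (r - s - 1) * Rpower L1 (3 - s).
Proof.
  intros HK H1 H2 Hs Hm HL. unfold Kf.
  rewrite !Rpower_minus, Rpower_pow3, Rpower_1 by auto.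
  pose proof (inv_pow_le Lk L2 s HK H2 Hs HL).
  pose proof (Rpower_pos Lk r). pose proof (Rpower_pos L1 s). pose proof (Rpower_pos L2 s).
  pose proof (Rpower_pos Lk s). pose proof (Rpower_pos 4 s).
  unfold Rdiv. rewrite Rinv_mult.
  replace (Rpower Lk r * m ^ 2 * (/ Rpower L1 s * / Rpower L2 s))
    with ((Rpower Lk r * / Rpower L1 s) * (m ^ 2 * / Rpower L2 s)) by ring.
  replace (2 * Rpower 4 s * (Rpower Lk r * / Rpower Lk s * / Lk) * (L1 ^ 3 * / Rpower L1 s))
    with ((Rpower Lk r * / Rpower L1 s) * ((2 * L1 ^ 3 / Lk) * (Rpower 4 s / Rpower Lk s))) by (unfold Rdiv; ring).
  apply Rmult_le_compat_l; [apply Rmult_le_pos; [lra| left; apply Rinv_0_lt_compat; lra]|].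
  apply Rmult_le_compat; auto; [apply pow2_ge_0| left; apply Rinv_0_lt_compat; lra].
Qed.

Lemma Kf_R3 r s Lk L1 L2 m : 0 < Lk -> 0 < L1 -> 0 < L2 -> 0 <= s ->
  m ^ 2 <= 2 * L1 ^ 3 / Lk -> L1 <= 4 * L2 ->
  Kf r s Lk L1 L2 m <= 2 * Rpower 4 s * Rpower Lk (r - 1) * Rpower L1 (3 - 2 * s).
Proof.
  intros HK H1 H2 Hs Hm HL. unfold Kf.
  rewrite !Rpower_minus, Rpower_pow3, Rpower_1 by auto.
  pose proof (inv_pow_le L1 L2 s H1 H2 Hs HL).
  pose proof (Rpower_pos Lk r). pose proof (Rpower_pos L1 s). pose proof (Rpower_pos L2 s).
  pose proof (Rpower_pos Lk s). pose proof (Rpower_pos 4 s).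
  replace (Rpower L1 (2 * s)) with (Rpower L1 s * Rpower L1 s)
    by (rewrite <- Rpower_plus; f_equal; ring).
  unfold Rdiv. rewrite !Rinv_mult.
  replace (Rpower Lk r * m ^ 2 * (/ Rpower L1 s * / Rpower L2 s))
    with ((Rpower Lk r * / Rpower L1 s) * (m ^ 2 * / Rpower L2 s)) by ring.
  replace (2 * Rpower 4 s * (Rpower Lk r * / Lk) * (L1 ^ 3 * (/ Rpower L1 s * / Rpower L1 s)))
    with ((Rpower Lk r * / Rpower L1 s) * ((2 * L1 ^ 3 / Lk) * (Rpower 4 s / Rpower L1 s))) by (unfold Rdiv; ring).
  apply Rmult_le_compat_l; [apply Rmult_le_pos; [lra| left; apply Rinv_0_lt_compat; lra]|].
  apply Rmult_le_compat; auto; [apply pow2_ge_0| left; apply Rinv_0_lt_compat; lra].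
Qed.

Definition mk (k k1 : Z) : R :=
  IZR k1 ^ 2 / IZR k ^ 2 * Rmin (IZR (k - k1) ^ 2) (Rabs (IZR k * IZR k1)).

Definition Kk r s k k1 := Kf r s (L k) (L k1) (L (k - k1)) (mk k k1).

Definition G1 r s (k j : Z) : R :=
  if Rle_dec (Rabs (IZR j)) (Rabs (IZR k)) then
    16 * Rpower 4 s * Rpower (L k) (r - s) * Rpower (L j) (2 - s) else 0.
Definition G2 r s (k j : Z) : R :=
  if Rle_dec (Rabs (IZR j)) (Rabs (IZR k)) then
    2 * Rpower 4 s * Rpower (L k) (r - s - 1) * Rpower (L j) (3 - s) else 0.
Definition G3 r s (k j : Z) : R :=
  if Rle_dec (Rabs (IZR j)) (Rabs (IZR k)) then 0 else
    2 * Rpower 4 s * Rpower (L k) (r - 1) * Rpower (L j) (3 - 2 * s).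

Lemma G1_nonneg r s k j : 0 <= G1 r s k j.
Proof. unfold G1. destruct Rle_dec; [|lra].
  pose proof (Rpower_pos 4 s). pose proof (Rpower_pos (L k) (r-s)). pose proof (Rpower_pos (L j) (2-s)).
  apply Rmult_le_pos; [|lra]. apply Rmult_le_pos; [|lra]. lra. Qed.
Lemma G2_nonneg r s k j : 0 <= G2 r s k j.
Proof. unfold G2. destruct Rle_dec; [|lra].
  pose proof (Rpower_pos 4 s). pose proof (Rpower_pos (L k) (r-s-1)). pose proof (Rpower_pos (L j) (3-s)).
  apply Rmult_le_pos; [|lra]. apply Rmult_le_pos; [|lra]. lra. Qed.
Lemma G3_nonneg r s k j : 0 <= G3 r s k j.
Proof. unfold G3. destruct Rle_dec; [lra|].
  pose proof (Rpower_pos 4 s). pose proof (Rpower_pos (L k) (r-1)). pose proof (Rpower_pos (L j) (3-2*s)).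
  apply Rmult_le_pos; [|lra]. apply Rmult_le_pos; [|lra]. lra. Qed.

Lemma L_abs j : L j = 1 + Rabs (IZR j) ^ 2.
Proof. unfold L. rewrite pow2_abs. reflexivity. Qed.

Lemma mk_abs k k1 : mk k k1 =
  Rabs (IZR k1) ^ 2 / Rabs (IZR k) ^ 2 * Rmin (Rabs (IZR (k - k1)) ^ 2) (Rabs (IZR k) * Rabs (IZR k1)).
Proof. unfold mk. rewrite !pow2_abs, Rabs_mult. reflexivity. Qed.

Lemma mbound1 a b c : 0 <= a -> 0 <= b -> 1 <= c -> a <= 2 * c ->
  (a ^ 2 / c ^ 2 * Rmin (b ^ 2) (c * a)) ^ 2 <= 16 * (1 + b ^ 2) ^ 2.
Proof.
  intros Ha Hb Hc Hac.
  set (m := a ^ 2 / c ^ 2 * Rmin (b ^ 2) (c * a)).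
  assert (Hq : 0 <= a ^ 2 / c ^ 2 <= 4).
  { split. apply Rmult_le_pos; [nra| left; apply Rinv_0_lt_compat; nra].
    apply (Rmult_le_reg_r (c ^ 2)); [nra|]. unfold Rdiv. rewrite Rmult_assoc, Rinv_l by nra. nra. }
  assert (0 <= m).
  { unfold m. apply Rmult_le_pos; [lra|]. apply Rmin_case; nra. }
  assert (m <= 4 * (1 + b ^ 2)).
  { unfold m. apply Rle_trans with (a ^ 2 / c ^ 2 * b ^ 2).
    - apply Rmult_le_compat_l; [lra| apply Rmin_l].
    - nra. }
  nra.
Qed.

Lemma mbound2 a b c : 0 <= a -> 0 <= b -> 1 <= c ->
  (a ^ 2 / c ^ 2 * Rmin (b ^ 2) (c * a)) ^ 2 <= 2 * (1 + a ^ 2) ^ 3 / (1 + c ^ 2).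
Proof.
  intros Ha Hb Hc.
  set (m := a ^ 2 / c ^ 2 * Rmin (b ^ 2) (c * a)).
  assert (0 <= m).
  { unfold m. apply Rmult_le_pos; [apply Rmult_le_pos; [nra| left; apply Rinv_0_lt_compat; nra]|].
    apply Rmin_case; nra. }
  assert (m <= a ^ 3 / c).
  { unfold m. apply Rle_trans with (a ^ 2 / c ^ 2 * (c * a)).
    - apply Rmult_le_compat_l; [apply Rmult_le_pos; [nra| left; apply Rinv_0_lt_compat; nra]| apply Rmin_r].
    - right. field. lra. }
  assert (0 <= a ^ 3 / c) by (apply Rmult_le_pos; [nra| left; apply Rinv_0_lt_compat; lra]).
  apply Rle_trans with ((a ^ 3 / c) ^ 2); [nra|].
  replace ((a ^ 3 / c) ^ 2) with (a ^ 6 * / c ^ 2) by (field; lra).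
  replace (2 * (1 + a ^ 2) ^ 3 / (1 + c ^ 2)) with ((1 + a ^ 2) ^ 3 * (2 / (1 + c ^ 2))) by (field; nra).
  apply Rmult_le_compat; [nra| left; apply Rinv_0_lt_compat; nra| nra|].
  apply (Rmult_le_reg_r (c ^ 2 * (1 + c ^ 2))); [nra|].
  replace (/ c ^ 2 * (c ^ 2 * (1 + c ^ 2))) with (1 + c ^ 2) by (field; lra).
  replace (2 / (1 + c ^ 2) * (c ^ 2 * (1 + c ^ 2))) with (2 * c ^ 2) by (field; nra).
  nra.
Qed.

Lemma Kk_split r s k k1 : k <> 0%Z -> 0 <= s ->
  Kk r s k k1 <= G1 r s k (k - k1) + G2 r s k k1 + G3 r s k k1.
Proof.
  intros Hk Hs.
  pose proof (G1_nonneg r s k (k - k1)). pose proof (G2_nonneg r s k k1). pose proof (G3_nonneg r s k k1).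
  set (a := Rabs (IZR k1)). set (b := Rabs (IZR (k - k1))). set (c := Rabs (IZR k)).
  assert (Ha : 0 <= a) by apply Rabs_pos. assert (Hb : 0 <= b) by apply Rabs_pos.
  assert (Hc : 1 <= c).
  { unfold c. rewrite Rabs_Zabs. apply IZR_le. lia. }
  assert (Ht1 : c <= a + b).
  { unfold a, b, c. replace (IZR k) with (IZR k1 + IZR (k - k1)) by (rewrite minus_IZR; ring). apply Rabs_triang. }
  assert (Ht2 : a <= b + c).
  { unfold a, b, c. replace (IZR k1) with (- IZR (k - k1) + IZR k) by (rewrite minus_IZR; ring).
    eapply Rle_trans; [apply Rabs_triang|]. rewrite Rabs_Ropp. lra. }
  assert (Ht3 : b <= a + c).
  { unfold a, b, c. rewrite minus_IZR. unfold Rminus.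
    eapply Rle_trans; [apply Rabs_triang|]. rewrite Rabs_Ropp. lra. }
  unfold Kk. rewrite mk_abs, !L_abs. fold a b c.
  assert (HLpos : forall x, 0 < 1 + x ^ 2) by (intros; pose proof (pow2_ge_0 x); lra).
  destruct (Rle_dec b c) as [Hbc|Hbc]; [destruct (Rle_dec b a) as [Hba|Hba]|].
  -
    apply Rle_trans with (G1 r s k (k - k1)); [|lra].
    unfold G1. fold b c. destruct Rle_dec; [|contradiction].
    rewrite !L_abs. fold b c.
    apply Kf_R1; auto. apply mbound1; lra. nra.
  - destruct (Rle_dec a c) as [Hac|Hac].
    +
      apply Rle_trans with (G2 r s k k1); [|lra].
      unfold G2. fold a c. destruct Rle_dec; [|contradiction].
      rewrite !L_abs. fold a c.
      apply Kf_R2; auto. apply mbound2; lra. nra.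
    + apply Rle_trans with (G3 r s k k1); [|lra].
      unfold G3. fold a c. destruct Rle_dec; [contradiction|].
      rewrite !L_abs. fold a c.
      apply Kf_R3; auto. apply mbound2; lra. nra.
  - destruct (Rle_dec a c) as [Hac|Hac].
    + apply Rle_trans with (G2 r s k k1); [|lra].
      unfold G2. fold a c. destruct Rle_dec; [|contradiction].
      rewrite !L_abs. fold a c.
      apply Kf_R2; auto. apply mbound2; lra. nra.
    + apply Rle_trans with (G3 r s k k1); [|lra].
      unfold G3. fold a c. destruct Rle_dec; [contradiction|].
      rewrite !L_abs. fold a c.
      apply Kf_R3; auto. apply mbound2; lra.
      destruct (Rle_dec a b); nra.
Qed.

Lemma isum_zero_le a lo n : (forall i, (i < n)%nat -> a (lo + Z.of_nat i)%Z <= 0) -> isum a lo n <= 0.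
Proof.
  intros H. apply Rle_trans with (isum (fun _ => 0) lo n).
  - apply isum_le_in. auto.
  - rewrite isum_const. lra.
Qed.

Lemma isum_even a M : (forall x, 0 <= a x) -> (forall x, a (- x)%Z = a x) ->
  isum a (- Z.of_nat M) (2 * M + 1) <= 2 * isum a 0 (S M).
Proof.
  intros Ha He.
  replace (2 * M + 1)%nat with (M + S M)%nat by lia.
  rewrite isum_app. replace (- Z.of_nat M + Z.of_nat M)%Z with 0%Z by lia.
  assert (isum a (- Z.of_nat M) M <= isum a 0 (S M)).
  { rewrite (isum_ext a (fun x => a (0 - x)%Z)) by (intros x; rewrite <- He; f_equal; lia).
    rewrite isum_refl. apply isum_sub; auto; lia. }
  lra.
Qed.

Lemma isum_supp a lo' n' : (forall x, 0 <= a x) ->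
  (forall x, (x < lo' \/ lo' + Z.of_nat n' <= x)%Z -> a x = 0) ->
  forall lo n, isum a lo n <= isum a lo' n'.
Proof.
  intros Ha Hs lo n.
  set (lo2 := Z.min lo lo').
  set (hi2 := Z.max (lo + Z.of_nat n) (lo' + Z.of_nat n')).
  apply Rle_trans with (isum a lo2 (Z.to_nat (hi2 - lo2))).
  { apply isum_sub; auto; unfold lo2, hi2; lia. }
  set (d1 := Z.to_nat (lo' - lo2)).
  set (d2 := Z.to_nat (hi2 - lo' - Z.of_nat n')).
  replace (Z.to_nat (hi2 - lo2)) with (d1 + n' + d2)%nat by (unfold d1, d2, lo2, hi2; lia).
  rewrite !isum_app.
  replace (lo2 + Z.of_nat d1)%Z with lo' by (unfold d1, lo2; lia).
  assert (isum a lo2 d1 <= 0).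
  { apply isum_zero_le. intros i Hi. rewrite Hs; [lra|]. left. unfold d1, lo2 in *; lia. }
  replace (lo2 + Z.of_nat (d1 + n'))%Z with (lo' + Z.of_nat n')%Z by (unfold d1, lo2; lia).
  assert (isum a (lo' + Z.of_nat n') d2 <= 0).
  { apply isum_zero_le. intros i Hi. rewrite Hs; [lra|]. right. lia. }
  lra.
Qed.

Lemma inner_sum (h : Z -> R) (k : Z) :
  (forall x, 0 <= h x) -> (forall x, h (- x)%Z = h x) ->
  forall lo n,
  isum (fun j => if Rle_dec (Rabs (IZR j)) (Rabs (IZR k)) then h j else 0) lo n
    <= 2 * isum h 0 (S (Z.abs_nat k)).
Proof.
  intros Hh He lo n.
  set (c := Z.abs_nat k).
  set (g := fun j => if Rle_dec (Rabs (IZR j)) (Rabs (IZR k)) then h j else 0).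
  assert (Hg : forall x, 0 <= g x) by (intros x; unfold g; destruct Rle_dec; auto; lra).
  eapply Rle_trans; [apply (isum_supp g (- Z.of_nat c) (2 * c + 1)); auto|].
  { intros x Hx. unfold g. destruct Rle_dec as [r|r]; auto.
    exfalso. rewrite !Rabs_Zabs in r. apply le_IZR in r. unfold c in Hx. lia. }
  eapply Rle_trans; [apply isum_even; auto|].
  { intros x. unfold g. rewrite opp_IZR, Rabs_Ropp. destruct Rle_dec; auto. }
  apply Rmult_le_compat_l; [lra|].
  apply isum_le_in. intros i Hi. unfold g. destruct Rle_dec; [lra|].
  exfalso. apply n0. rewrite !Rabs_Zabs. apply IZR_le. unfold c in Hi. lia.
Qed.

Lemma outer_sum (h : Z -> R) (k : Z) B :
  (forall x, 0 <= h x) -> (forall x, h (- x)%Z = h x) ->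
  (forall M, isum h (Z.of_nat (Z.abs_nat k) + 1) M <= B) ->
  forall lo n,
  isum (fun j => if Rle_dec (Rabs (IZR j)) (Rabs (IZR k)) then 0 else h j) lo n <= 2 * B.
Proof.
  intros Hh He HB.
  set (c := Z.abs_nat k).
  set (g := fun j => if Rle_dec (Rabs (IZR j)) (Rabs (IZR k)) then 0 else h j).
  assert (Hg : forall x, 0 <= g x) by (intros x; unfold g; destruct Rle_dec; auto; lra).
  apply isum_symbound; auto. intros M.
  eapply Rle_trans; [apply isum_even; auto|].
  { intros x. unfold g. rewrite opp_IZR, Rabs_Ropp. destruct Rle_dec; auto. }
  apply Rmult_le_compat_l; [lra|].
  apply Rle_trans with (isum g 0 (S c + M)).
  { apply isum_sub; auto; lia. }
  rewrite isum_app.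
  assert (isum g 0 (S c) <= 0).
  { apply isum_zero_le. intros i Hi. unfold g. destruct Rle_dec; [lra|].
    exfalso. apply n. rewrite !Rabs_Zabs. apply IZR_le. unfold c in Hi. lia. }
  assert (isum g (0 + Z.of_nat (S c)) M <= isum h (Z.of_nat c + 1) M).
  { replace (0 + Z.of_nat (S c))%Z with (Z.of_nat c + 1)%Z by lia.
    apply isum_le. intros x. unfold g. destruct Rle_dec; auto. lra. }
  specialize (HB M). fold c in HB. lra.
Qed.

Lemma Lpow_le1 X a : 1 <= X -> a <= 0 -> Rpower X a <= 1.
Proof. intros. rewrite <- (Rpower_O X) by lra. apply Rle_Rpower; auto. Qed.

Lemma Lpow_comb X a b : 1 <= X -> a + b <= 0 -> Rpower X a * Rpower X b <= 1.
Proof. intros. rewrite <- Rpower_plus. apply Lpow_le1; auto. Qed.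

Lemma LP2tot e n : e < - / 2 ->
  isum (fun j => Rpower (L j) e) 0 n <= 2 + Rpower (/ 2) (e + / 2) / (- (2 * e + 1)).
Proof.
  intros He.
  assert (Hpos : forall j, 0 <= Rpower (L j) e) by (intros; left; apply Rpower_pos).
  apply Rle_trans with (isum (fun j => Rpower (L j) e) 0 (2 + n)).
  { apply isum_sub; auto; lia. }
  rewrite isum_app. simpl (0 + Z.of_nat 2)%Z.
  assert (isum (fun j => Rpower (L j) e) 0 2 <= 2).
  { apply Rle_trans with (isum (fun _ => 1) 0 2).
    - apply isum_le_in. intros i _. apply Lpow_le1; [apply L_ge1| lra].
    - rewrite isum_const. simpl. lra. }
  pose proof (LP2 e 1 n He ltac:(lia)). simpl (1 + 1)%Z in H0.
  assert (Rpower (L 1) (e + / 2) <= 1) by (apply Lpow_le1; [apply L_ge1| lra]).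
  assert (0 <= Rpower (/ 2) (e + / 2) / - (2 * e + 1)).
  { unfold Rdiv. apply Rmult_le_pos; [left; apply Rpower_pos| left; apply Rinv_0_lt_compat; lra]. }
  nra.
Qed.

Lemma L_of_abs k : L k = L (Z.of_nat (Z.abs_nat k)).
Proof. rewrite !L_abs. f_equal. rewrite !Rabs_Zabs. f_equal. f_equal. lia. Qed.

Lemma kernel_bound r s : 1 <= r <= s -> r + 5 / 2 <= 2 * s -> 7 / 4 < s -> s <> 5 / 2 ->
  exists C, forall k, k <> 0%Z -> forall lo n, isum (Kk r s k) lo n <= C.
Proof.
  intros Hr Hrs Hs7 Hs5.
  set (c4 := Rpower 4 s). assert (Hc4 : 0 < c4) by apply Rpower_pos.
  assert (HB1 : exists D1, 0 <= D1 /\ forall c, Rpower (L (Z.of_nat c)) (r - s) *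
             isum (fun j => Rpower (L j) (2 - s)) 0 (S c) <= D1).
  { destruct (Rle_dec s 2) as [H2|H2].
    - exists 2. split; [lra|]. intros c.
      pose proof (LP0 (2 - s) c ltac:(lra)).
      pose proof (Lpow_comb (L (Z.of_nat c)) (r - s) (2 - s + / 2) (L_ge1 _) ltac:(lra)).
      pose proof (Rpower_pos (L (Z.of_nat c)) (r - s)). nra.
    - destruct (Rlt_dec s (5/2)) as [H5|H5].
      + exists (2 + 1 / (2 * (2 - s) + 1)). split.
        { assert (0 < 1 / (2 * (2 - s) + 1)) by (apply Rdiv_lt_0_compat; lra). lra. }
        intros c. pose proof (LP1 (2 - s) c ltac:(lra)).
        pose proof (Lpow_comb (L (Z.of_nat c)) (r - s) (2 - s + / 2) (L_ge1 _) ltac:(lra)).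
        pose proof (Rpower_pos (L (Z.of_nat c)) (r - s)).
        assert (0 < 1 / (2 * (2 - s) + 1)) by (apply Rdiv_lt_0_compat; lra).
        set (D := 2 + 1 / (2 * (2 - s) + 1)) in *.
        pose proof (Rpower_pos (L (Z.of_nat c)) (2 - s + / 2)).
        eapply Rle_trans; [apply Rmult_le_compat_l; [lra| exact H]|].
        replace (Rpower (L (Z.of_nat c)) (r - s) * (D * Rpower (L (Z.of_nat c)) (2 - s + / 2)))
          with (D * (Rpower (L (Z.of_nat c)) (r - s) * Rpower (L (Z.of_nat c)) (2 - s + / 2))) by ring.
        assert (0 <= D) by (unfold D; lra).
        apply Rle_trans with (D * 1); [apply Rmult_le_compat_l; lra| lra].
      + set (D := 2 + Rpower (/ 2) ((2 - s) + / 2) / (- (2 * (2 - s) + 1))).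
        exists D. split.
        { unfold D. assert (0 <= Rpower (/ 2) (2 - s + / 2) / - (2 * (2 - s) + 1)).
          { unfold Rdiv. apply Rmult_le_pos; [left; apply Rpower_pos| left; apply Rinv_0_lt_compat; lra]. }
          lra. }
        intros c. pose proof (LP2tot (2 - s) (S c) ltac:(lra)). fold D in H.
        pose proof (Lpow_le1 (L (Z.of_nat c)) (r - s) (L_ge1 _) ltac:(lra)).
        pose proof (Rpower_pos (L (Z.of_nat c)) (r - s)).
        assert (0 <= isum (fun j => Rpower (L j) (2 - s)) 0 (S c)).
        { apply isum_nonneg. intros; left; apply Rpower_pos. }
        nra. }
  assert (HB2 : forall c, Rpower (L (Z.of_nat c)) (r - s - 1) *
             isum (fun j => Rpower (L j) (3 - s)) 0 (S c) <= 2).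
  { intros c. pose proof (Rpower_pos (L (Z.of_nat c)) (r - s - 1)).
    destruct (Rle_dec s 3) as [H3|H3].
    - pose proof (LP0 (3 - s) c ltac:(lra)).
      pose proof (Lpow_comb (L (Z.of_nat c)) (r - s - 1) (3 - s + / 2) (L_ge1 _) ltac:(lra)).
      nra.
    - pose proof (LP0' (3 - s) c ltac:(lra)).
      pose proof (Lpow_comb (L (Z.of_nat c)) (r - s - 1) (/ 2) (L_ge1 _) ltac:(lra)).
      nra. }
  set (D3 := Rpower (/ 2) ((3 - 2 * s) + / 2) / (- (2 * (3 - 2 * s) + 1))).
  assert (HD3 : 0 <= D3).
  { unfold D3, Rdiv. apply Rmult_le_pos; [left; apply Rpower_pos| left; apply Rinv_0_lt_compat; lra]. }
  destruct HB1 as [D1 [HD1 HB1]].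
  exists (2 * (16 * c4) * D1 + 2 * (2 * c4) * 2 + 2 * (2 * c4 * D3)).
  intros k Hk lo n.
  set (c := Z.abs_nat k).
  assert (Hc1 : (1 <= Z.of_nat c)%Z) by (unfold c; lia).
  assert (HLk : L k = L (Z.of_nat c)) by apply L_of_abs.
  eapply Rle_trans; [apply isum_le; intros k1; apply (Kk_split r s k k1 Hk); lra|].
  rewrite !isum_plus.
  apply Rplus_le_compat; [apply Rplus_le_compat|].
  - rewrite (isum_refl (G1 r s k) k lo n).
    set (h1 := fun j => 16 * c4 * Rpower (L k) (r - s) * Rpower (L j) (2 - s)).
    change (G1 r s k) with (fun j => if Rle_dec (Rabs (IZR j)) (Rabs (IZR k)) then h1 j else 0).
    eapply Rle_trans; [apply inner_sum|].
    + intros x. unfold h1. pose proof (Rpower_pos (L k) (r - s)). pose proof (Rpower_pos (L x) (2 - s)).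
      apply Rmult_le_pos; [|lra]. apply Rmult_le_pos; lra.
    + intros x. unfold h1. rewrite !(L_abs (- x)), opp_IZR, Rabs_Ropp, <- L_abs. reflexivity.
    + fold c. unfold h1. rewrite isum_scal. rewrite HLk.
      specialize (HB1 c). nra.
  - set (h2 := fun j => 2 * c4 * Rpower (L k) (r - s - 1) * Rpower (L j) (3 - s)).
    change (G2 r s k) with (fun j => if Rle_dec (Rabs (IZR j)) (Rabs (IZR k)) then h2 j else 0).
    eapply Rle_trans; [apply inner_sum|].
    + intros x. unfold h2. pose proof (Rpower_pos (L k) (r - s - 1)). pose proof (Rpower_pos (L x) (3 - s)).
      apply Rmult_le_pos; [|lra]. apply Rmult_le_pos; lra.
    + intros x. unfold h2. rewrite !(L_abs (- x)), opp_IZR, Rabs_Ropp, <- L_abs. reflexivity.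
    + fold c. unfold h2. rewrite isum_scal. rewrite HLk.
      specialize (HB2 c). nra.
  - set (h3 := fun j => 2 * c4 * Rpower (L k) (r - 1) * Rpower (L j) (3 - 2 * s)).
    change (G3 r s k) with (fun j => if Rle_dec (Rabs (IZR j)) (Rabs (IZR k)) then 0 else h3 j).
    apply outer_sum.
    + intros x. unfold h3. pose proof (Rpower_pos (L k) (r - 1)). pose proof (Rpower_pos (L x) (3 - 2 * s)).
      apply Rmult_le_pos; [|lra]. apply Rmult_le_pos; lra.
    + intros x. unfold h3. rewrite !(L_abs (- x)), opp_IZR, Rabs_Ropp, <- L_abs. reflexivity.
    + intros M. fold c. unfold h3. rewrite isum_scal. rewrite HLk.
      pose proof (LP2 (3 - 2 * s) (Z.of_nat c) M ltac:(lra) Hc1). fold D3 in H.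
      pose proof (Lpow_comb (L (Z.of_nat c)) (r - 1) (3 - 2 * s + / 2) (L_ge1 _) ltac:(lra)).
      pose proof (Rpower_pos (L (Z.of_nat c)) (r - 1)).
      pose proof (Rpower_pos (L (Z.of_nat c)) (3 - 2 * s + / 2)).
      set (X := Rpower (L (Z.of_nat c)) (r - 1)) in *.
      set (Y := Rpower (L (Z.of_nat c)) (3 - 2 * s + / 2)) in *.
      set (S := isum (fun j : Z => Rpower (L j) (3 - 2 * s)) (Z.of_nat c + 1) M) in *.
      assert (X * S <= D3).
      { apply Rle_trans with (X * (D3 * Y)); [apply Rmult_le_compat_l; lra|].
        replace (X * (D3 * Y)) with (D3 * (X * Y)) by ring.
        apply Rle_trans with (D3 * 1); [apply Rmult_le_compat_l; lra| lra]. }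
      replace (2 * c4 * X * S) with ((2 * c4) * (X * S)) by ring.
      apply Rmult_le_compat_l; lra.
Qed.


Lemma isum_shift a d lo n : isum (fun k => a (k - d)%Z) lo n = isum a (lo - d) n.
Proof.
  induction n; [reflexivity|]. rewrite !isum_S, IHn.
  replace (lo + Z.of_nat n - d)%Z with (lo - d + Z.of_nat n)%Z by lia. reflexivity.
Qed.

Lemma zsum_plus a b : zsummable a -> zsummable b ->
  zsummable (fun x => a x + b x) /\ zsum (fun x => a x + b x) = zsum a + zsum b.
Proof.
  intros Ha Hb.
  assert (E : forall n, zpair (fun x => a x + b x) n = plus (zpair a n) (zpair b n)).
  { intros n. unfold zpair. change plus with Rplus. ring. }
  split.
  - unfold zsummable. eapply ex_series_ext; [intros n; symmetry; apply E|].
    apply (ex_series_plus (K:=R_AbsRing) (V:=R_NormedModule)); auto.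
  - unfold zsum. rewrite (Series_ext _ _ E). apply Series_plus; auto.
Qed.

Lemma zsum_zero : zsummable (fun _ => 0) /\ zsum (fun _ => 0) = 0.
Proof.
  destruct (zsum_bound (fun _ => 0) 0) as [H1 H2].
  - intros; lra.
  - intros lo n. rewrite isum_const. lra.
  - split; auto. pose proof (zsum_nonneg (fun _ => 0) ltac:(intros; lra) H1). lra.
Qed.

Lemma zsum_isum (F : Z -> Z -> R) lo n : (forall k, zsummable (F k)) ->
  zsummable (fun x => isum (fun k => F k x) lo n) /\
  isum (fun k => zsum (F k)) lo n = zsum (fun x => isum (fun k => F k x) lo n).
Proof.
  intros HF. induction n.
  - simpl. destruct zsum_zero. split; auto.
  - destruct IHn as [H1 H2].
    destruct (zsum_plus _ _ H1 (HF (lo + Z.of_nat n)%Z)) as [H3 H4].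
    rewrite isum_S. split.
    + exact H3.
    + rewrite H2, <- H4. reflexivity.
Qed.

Lemma amgm_lim x C V : 0 <= x -> 0 < C -> 0 <= V ->
  (forall t, 0 < t -> x <= (t * C + V / t) / 2) -> x ^ 2 <= C * V.
Proof.
  intros Hx HC HV H.
  destruct (Rle_lt_or_eq_dec 0 V HV) as [HVp|HV0].
  - set (t := sqrt V / sqrt C).
    assert (Hsv : 0 < sqrt V) by (apply sqrt_lt_R0; auto).
    assert (Hsc : 0 < sqrt C) by (apply sqrt_lt_R0; auto).
    assert (Ht : 0 < t) by (unfold t; apply Rdiv_lt_0_compat; auto).
    specialize (H t Ht).
    assert (E : (t * C + V / t) / 2 = sqrt V * sqrt C).
    { unfold t. set (sc := sqrt C) in *. set (sv := sqrt V) in *.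
      assert (HC' : C = sc * sc) by (unfold sc; rewrite sqrt_sqrt; lra).
      assert (HV' : V = sv * sv) by (unfold sv; rewrite sqrt_sqrt; lra).
      rewrite HC', HV'. field. split; lra. }
    rewrite E in H.
    assert (x ^ 2 <= (sqrt V * sqrt C) ^ 2) by (apply pow_incr; auto).
    replace ((sqrt V * sqrt C) ^ 2) with ((sqrt V * sqrt V) * (sqrt C * sqrt C)) in H0 by ring.
    rewrite !sqrt_sqrt in H0 by lra. lra.
  - subst V. destruct (Rle_lt_or_eq_dec 0 x Hx) as [Hxp|Hx0].
    + exfalso. specialize (H (x / C) ltac:(apply Rdiv_lt_0_compat; auto)).
      replace ((x / C * C + 0 / (x / C)) / 2) with (x / 2) in H by (field; split; lra). lra.
    + subst. simpl. lra.
Qed.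

Lemma Im_le_Cmod z : Rabs (Im z) <= Cmod z.
Proof.
  pose proof (Cmod2_alt z). pose proof (Cmod_ge_0 z).
  apply Rsqr_incr_0_var; [| auto]. rewrite <- Rsqr_abs. unfold Rsqr. nra.
Qed.

Definition Wf (fh : Z -> C) (s : R) (j : Z) : R := sob_w s j * Cmod (conj_coef fh j) ^ 2.

Lemma sob_w_pos s j : 0 < sob_w s j.
Proof. apply Rpower_pos. Qed.

Lemma Wf_nonneg fh s j : 0 <= Wf fh s j.
Proof. unfold Wf. pose proof (sob_w_pos s j). pose proof (pow2_ge_0 (Cmod (conj_coef fh j))). nra. Qed.

Lemma W_bound fh s : inH s fh -> forall lo n, isum (Wf fh s) lo n <= Hnorm2 s fh.
Proof.
  intros Hs. set (A := fun j => sob_w s j * Cmod (fh j) ^ 2).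
  assert (HA : forall x, 0 <= A x).
  { intros x. unfold A. pose proof (sob_w_pos s x). pose proof (pow2_ge_0 (Cmod (fh x))). nra. }
  apply isum_symbound; [apply Wf_nonneg|]. intros M.
  rewrite (isum_ext _ (fun x => A (0 - x)%Z)).
  - rewrite isum_refl. unfold Hnorm2. apply zsum_ge; auto.
  - intros x. unfold Wf, A, conj_coef. rewrite Cmod_conj. unfold sob_w.
    replace (IZR (0 - x)) with (- IZR x) by (rewrite minus_IZR; simpl; ring).
    replace (- x)%Z with (0 - x)%Z by lia.
    replace ((- IZR x) ^ 2) with (IZR x ^ 2) by ring. reflexivity.
Qed.

Lemma amgm_pt wr ws1 ws2 m b1 b2 t : 0 < wr -> 0 < ws1 -> 0 < ws2 -> 0 < t ->
  sqrt wr * (m * b1 * b2) <= (t * (wr * m ^ 2 / (ws1 * ws2)) + (ws1 * b1 ^ 2) * (ws2 * b2 ^ 2) / t) / 2.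
Proof.
  intros Hr H1 H2 Ht.
  set (q := sqrt (ws1 * ws2)).
  assert (Hq : 0 < q) by (apply sqrt_lt_R0; nra).
  assert (Hq2 : q * q = ws1 * ws2) by (apply sqrt_sqrt; nra).
  assert (Hr2 : sqrt wr * sqrt wr = wr) by (apply sqrt_sqrt; lra).
  set (sr := sqrt wr) in *. 
  set (U := sr * m / q). set (V := q * b1 * b2).
  assert (E1 : sr * (m * b1 * b2) = U * V) by (unfold U, V; field; lra).
  assert (E2 : wr * m ^ 2 / (ws1 * ws2) = U ^ 2) by (unfold U; rewrite <- Hq2, <- Hr2; field; lra).
  assert (E3 : ws1 * b1 ^ 2 * (ws2 * b2 ^ 2) = V ^ 2) by (unfold V; transitivity ((q * q) * b1 ^ 2 * b2 ^ 2); [rewrite Hq2; ring| ring]).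
  rewrite E1, E2, E3.
  assert (0 <= (t * U - V) ^ 2 / t) by (apply Rmult_le_pos; [apply pow2_ge_0| left; apply Rinv_0_lt_compat; lra]).
  assert ((t * U ^ 2 + V ^ 2 / t) / 2 - U * V = ((t * U - V) ^ 2 / t) / 2) by (field; lra).
  lra.
Qed.

Definition Vk fh s k := zsum (fun k1 => Wf fh s k1 * Wf fh s (k - k1)).

Lemma WW_bound fh s k : inH s fh -> forall lo n,
  isum (fun k1 => Wf fh s k1 * Wf fh s (k - k1)) lo n <= Hnorm2 s fh * Hnorm2 s fh.
Proof.
  intros Hs lo n. pose proof (W_bound fh s Hs) as HW.
  assert (HS : 0 <= Hnorm2 s fh).
  { pose proof (HW 0%Z 0%nat). simpl in H. lra. }
  apply Rle_trans with (isum (fun k1 => Hnorm2 s fh * Wf fh s k1) lo n).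
  - apply isum_le. intros x. rewrite Rmult_comm. apply Rmult_le_compat_r; [apply Wf_nonneg|].
    pose proof (HW (k - x)%Z 1%nat). simpl in H. replace (k - x + 0)%Z with (k - x)%Z in H by lia. lra.
  - rewrite isum_scal. apply Rmult_le_compat_l; auto.
Qed.

Lemma Vk_prop fh s k : inH s fh ->
  zsummable (fun k1 => Wf fh s k1 * Wf fh s (k - k1)) /\ 0 <= Vk fh s k.
Proof.
  intros Hs.
  assert (Hn : forall x, 0 <= Wf fh s x * Wf fh s (k - x)).
  { intros. apply Rmult_le_pos; apply Wf_nonneg. }
  destruct (zsum_bound _ _ Hn (WW_bound fh s k Hs)) as [H1 H2].
  split; auto. apply zsum_nonneg; auto.
Qed.

Lemma Pk_bound r s C tau fh k : 0 < C -> 0 < tau -> inH s fh ->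
  (forall k, k <> 0%Z -> forall lo n, isum (Kk r s k) lo n <= C) ->
  sob_w r k * Cmod (P1coef tau fh k) ^ 2 <= 64 * tau ^ 4 * C * Vk fh s k.
Proof.
  intros HC Ht Hs HK.
  destruct (Vk_prop fh s k Hs) as [HVs HV].
  destruct (Z.eq_dec k 0) as [Hk|Hk].
  - subst. unfold P1coef. simpl. rewrite Cmod_0.
    assert (0 <= 64 * tau ^ 4 * C * Vk fh s 0) by (apply Rmult_le_pos; [apply Rmult_le_pos; [apply Rmult_le_pos; [lra| apply pow_le; lra]| lra]| auto]).
    simpl. lra.
  - unfold P1coef. rewrite (proj2 (Z.eqb_neq k 0) Hk).
    set (g := fun k1 => (RtoC (IZR k1 ^ 2 / IZR k ^ 2) * Iphase tau k k1 (k - k1)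
                 * conj_coef fh k1 * conj_coef fh (k - k1))%C).
    change (zsumC (fun k1 => let k2 := (k - k1)%Z in
       (RtoC (IZR k1 ^ 2 / IZR k ^ 2) * Iphase tau k k1 k2 * conj_coef fh k1 * conj_coef fh k2)%C))
      with (zsumC g).
    set (b := fun j => Cmod (conj_coef fh j)).
    set (h := fun k1 => 4 * tau ^ 2 * (mk k k1 * b k1 * b (k - k1)%Z)).
    assert (Hg : forall k1, Cmod (g k1) <= h k1).
    { intros k1. unfold g, h, b. rewrite !Cmod_mult, Cmod_R.
      pose proof (Iphase_bound tau k k1 (k - k1) Ht).
      pose proof (Cmod_ge_0 (conj_coef fh k1)). pose proof (Cmod_ge_0 (conj_coef fh (k - k1))).
      pose proof (Cmod_ge_0 (Iphase tau k k1 (k - k1))).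
      assert (Hx : 0 <= IZR k1 ^ 2 / IZR k ^ 2).
      { apply Rmult_le_pos; [apply pow2_ge_0| left; apply Rinv_0_lt_compat].
        assert (IZR k <> 0) by (apply not_0_IZR; auto). nra. }
      rewrite Rabs_right by lra. unfold mk.
      set (x := IZR k1 ^ 2 / IZR k ^ 2) in *.
      set (mn := Rmin (IZR (k - k1) ^ 2) (Rabs (IZR k * IZR k1))) in *.
      set (c1 := Cmod (conj_coef fh k1)) in *. set (c2 := Cmod (conj_coef fh (k - k1))) in *.
      set (I := Cmod (Iphase tau k k1 (k - k1))) in *.
      replace (4 * tau ^ 2 * (x * mn * c1 * c2)) with (x * (4 * tau ^ 2 * mn) * c1 * c2) by ring.
      apply Rmult_le_compat_r; auto. apply Rmult_le_compat_r; auto.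
      apply Rmult_le_compat_l; auto. }
    set (wr := sob_w r k).
    assert (Hwr : 0 < wr) by apply sob_w_pos.
    set (sr := sqrt wr).
    assert (Hsr : 0 < sr) by (apply sqrt_lt_R0; auto).
    set (V := Vk fh s k) in *.
    set (x := sr * Cmod (zsumC g) / (8 * tau ^ 2)).
    assert (Hx0 : 0 <= x).
    { unfold x. apply Rmult_le_pos; [apply Rmult_le_pos; [lra| apply Cmod_ge_0]|].
      left; apply Rinv_0_lt_compat; nra. }
    assert (Hxb : forall t, 0 < t -> x <= (t * C + V / t) / 2).
    { intros t Htp.
      set (B := 4 * tau ^ 2 * ((t * C + V / t) / 2) / sr).
      assert (HB : forall lo n, isum h lo n <= B).
      { intros lo n. unfold h. rewrite isum_scal. unfold B.
        assert (Hin : sr * isum (fun k1 => mk k k1 * b k1 * b (k - k1)%Z) lo n <= (t * C + V / t) / 2).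
        { rewrite <- isum_scal.
          apply Rle_trans with (isum (fun k1 => (t * Kk r s k k1 + Wf fh s k1 * Wf fh s (k - k1) / t) / 2) lo n).
          - apply isum_le. intros k1. unfold Kk, Kf, Wf, b, sr, wr.
            apply amgm_pt; auto; apply Rpower_pos.
          - rewrite (isum_ext _ (fun k1 => (t / 2) * Kk r s k k1 + (/ (2 * t)) * (Wf fh s k1 * Wf fh s (k - k1))))
              by (intros; field; lra).
            rewrite isum_plus, !isum_scal.
            pose proof (HK k Hk lo n).
            pose proof (zsum_ge (fun k1 => Wf fh s k1 * Wf fh s (k - k1)) lo n
                          ltac:(intros; apply Rmult_le_pos; apply Wf_nonneg) HVs) as H0.
            change (zsum (fun k1 => Wf fh s k1 * Wf fh s (k - k1))) with V in H0.
            assert (t / 2 * isum (Kk r s k) lo n <= t / 2 * C) by (apply Rmult_le_compat_l; lra).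
            assert (/ (2 * t) * isum (fun k1 => Wf fh s k1 * Wf fh s (k - k1)) lo n <= / (2 * t) * V).
            { apply Rmult_le_compat_l; [left; apply Rinv_0_lt_compat; lra| auto]. }
            replace ((t * C + V / t) / 2) with (t / 2 * C + / (2 * t) * V) by (field; lra). lra. }
        set (Q := isum (fun k1 => mk k k1 * b k1 * b (k - k1)%Z) lo n) in *.
        assert (Q <= ((t * C + V / t) / 2) / sr).
        { apply (Rmult_le_reg_l sr); auto. replace (sr * ((t * C + V / t) / 2 / sr)) with ((t * C + V / t) / 2) by (field; lra). auto. }
        replace (4 * tau ^ 2 * ((t * C + V / t) / 2) / sr) with (4 * tau ^ 2 * (((t * C + V / t) / 2) / sr)) by (field; lra).
        apply Rmult_le_compat_l; [nra| auto]. }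
      assert (Hre : forall k1, Rabs (Re (g k1)) <= h k1) by (intros; eapply Rle_trans; [apply re_le_Cmod| apply Hg]).
      assert (Him : forall k1, Rabs (Im (g k1)) <= h k1) by (intros; eapply Rle_trans; [apply Im_le_Cmod| apply Hg]).
      destruct (zsum_cmp _ _ _ Hre HB) as [_ H1].
      destruct (zsum_cmp _ _ _ Him HB) as [_ H2].
      assert (HCm : Cmod (zsumC g) <= 2 * B).
      { eapply Rle_trans; [apply Cmod_2Rmax|].
        change (fst (zsumC g)) with (zsum (fun k0 => Re (g k0))).
        change (snd (zsumC g)) with (zsum (fun k0 => Im (g k0))).
        assert (sqrt 2 <= 2).
        { rewrite <- (sqrt_square 2) at 2 by lra. apply sqrt_le_1_alt. lra. }
        assert (Rmax (Rabs (zsum (fun k0 => Re (g k0)))) (Rabs (zsum (fun k0 => Im (g k0)))) <= B)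
          by (apply Rmax_lub; auto).
        pose proof (Rmax_l (Rabs (zsum (fun k0 => Re (g k0)))) (Rabs (zsum (fun k0 => Im (g k0))))).
        pose proof (Rabs_pos (zsum (fun k0 => Re (g k0)))).
        apply Rmult_le_compat; auto; [apply sqrt_pos| lra]. }
      unfold x, B in *. 
      apply (Rmult_le_reg_l (8 * tau ^ 2)); [nra|].
      replace (8 * tau ^ 2 * (sr * Cmod (zsumC g) / (8 * tau ^ 2))) with (sr * Cmod (zsumC g)) by (field; lra).
      apply (Rmult_le_reg_l (/ sr)); [apply Rinv_0_lt_compat; lra|].
      replace (/ sr * (sr * Cmod (zsumC g))) with (Cmod (zsumC g)) by (field; lra).
      eapply Rle_trans; [exact HCm|]. right. field. lra. }
    pose proof (amgm_lim x C V Hx0 HC HV Hxb).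
    unfold x in H.
    replace ((sr * Cmod (zsumC g) / (8 * tau ^ 2)) ^ 2) with ((sr * sr) * Cmod (zsumC g) ^ 2 / (64 * tau ^ 4)) in H
      by (field; lra).
    unfold sr in H. rewrite sqrt_sqrt in H by lra.
    assert (Ht4 : 0 < 64 * tau ^ 4) by (apply Rmult_lt_0_compat; [lra| apply pow_lt; lra]).
    apply (Rmult_le_reg_r (/ (64 * tau ^ 4))); [apply Rinv_0_lt_compat; lra|].
    replace (64 * tau ^ 4 * C * V * / (64 * tau ^ 4)) with (C * V) by (field; lra).
    exact H.
Qed.


Lemma main_est r s C : 0 < C ->
  (forall k, k <> 0%Z -> forall lo n, isum (Kk r s k) lo n <= C) ->
  forall tau fh, 0 < tau -> inH s fh ->
  inH r (P1coef tau fh) /\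
  Hnorm r (P1coef tau fh) <= 8 * sqrt C * tau ^ 2 * Hnorm s fh ^ 2.
Proof.
  intros HC HK tau fh Ht Hs.
  set (S := Hnorm2 s fh).
  pose proof (W_bound fh s Hs) as HW.
  assert (HS : 0 <= S) by (pose proof (HW 0%Z 0%nat); simpl in H; unfold S; lra).
  assert (HVsum : forall lo n, isum (Vk fh s) lo n <= S * S).
  { intros lo n. unfold Vk.
    destruct (zsum_isum (fun k k1 => Wf fh s k1 * Wf fh s (k - k1)) lo n) as [H1 H2].
    { intros k. apply (Vk_prop fh s k Hs). }
    rewrite H2.
    apply zsum_bound.
    - intros x. apply isum_nonneg. intros. apply Rmult_le_pos; apply Wf_nonneg.
    - intros lo' n'.
      apply Rle_trans with (isum (fun x => S * Wf fh s x) lo' n').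
      + apply isum_le. intros x.
        rewrite isum_scal, isum_shift. rewrite Rmult_comm.
        apply Rmult_le_compat_r; [apply Wf_nonneg| apply HW].
      + rewrite isum_scal. apply Rmult_le_compat_l; auto. }
  set (T := fun k => sob_w r k * Cmod (P1coef tau fh k) ^ 2).
  assert (HT : forall x, 0 <= T x).
  { intros x. unfold T. pose proof (sob_w_pos r x). pose proof (pow2_ge_0 (Cmod (P1coef tau fh x))). nra. }
  assert (Ht4 : 0 < 64 * tau ^ 4 * C) by (apply Rmult_lt_0_compat; [apply Rmult_lt_0_compat; [lra| apply pow_lt; lra]| lra]).
  destruct (zsum_bound T (64 * tau ^ 4 * C * (S * S)) HT) as [H1 H2].
  { intros lo n. apply Rle_trans with (isum (fun k => 64 * tau ^ 4 * C * Vk fh s k) lo n).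
    - apply isum_le. intros k. unfold T. apply Pk_bound; auto.
    - rewrite isum_scal. apply Rmult_le_compat_l; [lra| auto]. }
  split; [exact H1|].
  unfold Hnorm. fold S. rewrite pow2_sqrt by auto.
  change (zsum T) with (Hnorm2 r (P1coef tau fh)) in H2.
  apply Rle_trans with (sqrt (64 * tau ^ 4 * C * (S * S))).
  { apply sqrt_le_1_alt. exact H2. }
  right.
  replace (64 * tau ^ 4 * C * (S * S)) with ((8 * sqrt C * tau ^ 2 * S) * (8 * sqrt C * tau ^ 2 * S)).
  - apply sqrt_square. pose proof (sqrt_pos C). apply Rmult_le_pos; auto.
    apply Rmult_le_pos; [nra| apply pow2_ge_0].
  - replace ((8 * sqrt C * tau ^ 2 * S) * (8 * sqrt C * tau ^ 2 * S))
      with (64 * (sqrt C * sqrt C) * tau ^ 4 * (S * S)) by ring.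
    rewrite sqrt_sqrt by lra. ring.
Qed.

Theorem lemma6 :
  forall r : R, 1 <= r ->
  exists eps0 : R, 0 < eps0 /\
  forall eps : R, 0 < eps < eps0 ->
  exists K : R,
  forall (tau : R) (fh : Z -> C), 0 < tau ->
    inH (r + p_eps r eps) fh ->
    inH r (P1coef tau fh) /\
    Hnorm r (P1coef tau fh) <= K * tau ^ 2 * Hnorm (r + p_eps r eps) fh ^ 2.
Proof.
  intros r Hr. exists (1 / 100). split; [lra|].
  intros eps Heps.
  set (s := r + p_eps r eps).
  assert (Hyp : 1 <= r <= s /\ r + 5 / 2 <= 2 * s /\ 7 / 4 < s /\ s <> 5 / 2).
  { unfold s, p_eps, p_base, p_plus.
    repeat (destruct Rle_dec); repeat (destruct Rlt_dec); 
      (split; [lra| split; [lra| split; [lra| intros HH; lra]]]). }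
  destruct Hyp as [H1 [H2 [H3 H4]]].
  destruct (kernel_bound r s H1 H2 H3 H4) as [C0 HC0].
  set (C' := Rmax C0 1).
  assert (HC' : 0 < C') by (unfold C'; pose proof (Rmax_r C0 1); lra).
  exists (8 * sqrt C').
  intros tau fh Ht Hs.
  apply (main_est r s C' HC'); auto.
  intros k Hk lo n. eapply Rle_trans; [apply HC0; auto| apply Rmax_l].
Qed.
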